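(* Let $r_0$, $\mathcal N_0$, $\mathcal N_p$, $w$ and $L_{*,w}$ be as defined in the context. Let $\lambda\in\mathbb C$. There exists $0\ne\tilde B\in H^1(\mathbb R;\mathbb C^2)$ with $L_{*,w}\tilde B=\lambda\tilde B$ if and only if there exists $0\ne B\in H^1(\mathbb R;\mathbb C^2)$ with $$\partial_xB=\begin{bmatrix}\mathcal N_0+\mathcal N_p&\lambda\\\lambda&-\mathcal N_0-\mathcal N_p\end{bmatrix}B.$$ More precisely, $(\lambda,\tilde B)$ is such an eigenpair if and only if $(\lambda,B)$ solves the latter problem, where $B$ and $\tilde B$ are related by $\tilde B(x)=\exp\big(w(x)+\int_{-\infty}^x\mathcal N_p(y)dy\big)B(x)$.
   Context: Nonlinearity: $\mathcal N:[0,\infty)\to\mathbb R$ is smooth, $\mathcal N'(s)<0$ for $s>0$, $\mathcal N(0)=1$, $\mathcal N(1)=0$, $\lim_{s\to\infty}\mathcal N(s)\in[-\infty,0)$, and $K:=-\mathcal N'(1)>0$. $r_0$ solves $r_0'=r_0\mathcal N(r_0^2)$, $r_0(0)=\frac12$. Set $\mathcal N_0(x)=\mathcal N(r_0(x)^2)$ and $\mathcal N_p(x)=\mathcal N'(r_0(x)^2)r_0(x)^2$. $w\in C^1$ with $w=0$ for $x\le-1$ and $w(x)=Kx$ for $x\ge1$. $L_{*,w}=\sigma_1(\partial_x-w'(x))+\begin{bmatrix}0&\mathcal N_0\\-\mathcal N_0-2\mathcal N_p&0\end{bmatrix}$ with $\sigma_1=\begin{bmatrix}0&1\\1&0\end{bmatrix}$.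 This is the weight-conjugated linearization about the non-moving kink $(r_0,0)$ of $u_t=v_x+\mathcal N(u^2+v^2)v$, $v_t=u_x-\mathcal N(u^2+v^2)u$. *)

(* Defs.v *)
From HB Require Import structures.
From mathcomp Require Import all_boot all_order all_algebra.
From mathcomp Require Import all_classical all_reals all_analysis.
From mathcomp Require Import complex.
Set Implicit Arguments. Unset Strict Implicit. Unset Printing Implicit Defensive.
Import Order.TTheory GRing.Theory Num.Theory.
Import numFieldNormedType.Exports.
Local Open Scope classical_set_scope.
Local Open Scope ring_scope.
Local Open Scope complex_scope.

Section Defs.
Variable R : realType.
Local Notation C := R[i].
Local Notation mu := (@lebesgue_measure R).

Definition smooth (f : R -> R) : Prop :=
  forall (n : nat) (x : R), derivable (iter n (@derive1 R R) f) x 1.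

Definition C1fun (f : R -> R) : Prop :=
  (forall x : R, derivable f x 1) /\ continuous (derive1 f).

Definition nonlinearity (N : R -> R) : Prop :=
  [/\ smooth N,
      (forall s : R, 0 < s -> derive1 N s < 0),
      N 0 = 1, N 1 = 0 &
      exists l : \bar R, ((N x)%:E @[x --> +oo%R] --> l) /\ (l < 0)%E].

Definition Kconst (N : R -> R) : R := - derive1 N 1.

Definition is_r0 (N r0 : R -> R) : Prop :=
  (forall x : R, derivable r0 x 1 /\ derive1 r0 x = r0 x * N (r0 x ^+ 2)) /\
  r0 0 = 2^-1.

Definition N0 (N r0 : R -> R) (x : R) : R := N (r0 x ^+ 2).
Definition Np (N r0 : R -> R) (x : R) : R := derive1 N (r0 x ^+ 2) * r0 x ^+ 2.

Definition is_weight (N w : R -> R) : Prop :=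
  [/\ C1fun w,
      (forall x : R, x <= -1 -> w x = 0) &
      (forall x : R, 1 <= x -> w x = Kconst N * x)].

Definition L2R (h : R -> R) : Prop :=
  measurable_fun setT h /\ (\int[mu]_x ((h x) ^+ 2)%:E < +oo)%E.
Definition L2C (f : R -> C) : Prop :=
  L2R (fun x => complex.Re (f x)) /\ L2R (fun x => complex.Im (f x)).

Definition Cint (a b : R) (g : R -> C) : C :=
  (\int[mu]_(x in `[a, b]) complex.Re (g x)) +i* (\int[mu]_(x in `[a, b]) complex.Im (g x)).

(* g is the (weak) derivative of f, f being its absolutely continuous
   representative: f b - f a = int_a^b g *)
Definition weak_deriv (f g : R -> C) : Prop :=
  forall a b : R, a <= b -> f b - f a = Cint a b g.

Definition H1_with_deriv (B dB : R -> C * C) : Prop :=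
  [/\ L2C (fun x => (B x).1), L2C (fun x => (B x).2),
      L2C (fun x => (dB x).1), L2C (fun x => (dB x).2) &
      weak_deriv (fun x => (B x).1) (fun x => (dB x).1) /\
      weak_deriv (fun x => (B x).2) (fun x => (dB x).2)].

(* L_{*,w} applied to Bt, whose weak derivative is dBt:
   sigma_1 (dBt - w' Bt) + [[0, N0]; [-N0 - 2 Np, 0]] Bt *)
Definition Lstar (N r0 w : R -> R) (Bt dBt : R -> C * C) (x : R) : C * C :=
  (((dBt x).2 - (derive1 w x)%:C * (Bt x).2) + (N0 N r0 x)%:C * (Bt x).2,
   ((dBt x).1 - (derive1 w x)%:C * (Bt x).1)
     + (- N0 N r0 x - 2 * Np N r0 x)%:C * (Bt x).1).

Definition is_eigenfunction (N r0 w : R -> R) (lam : C) (Bt : R -> C * C) :=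
  exists dBt : R -> C * C, H1_with_deriv Bt dBt /\
    {ae mu, forall x, Lstar N r0 w Bt dBt x = (lam * (Bt x).1, lam * (Bt x).2)}.

Definition solves_ODE (N r0 : R -> R) (lam : C) (B : R -> C * C) :=
  exists dB : R -> C * C, H1_with_deriv B dB /\
    {ae mu, forall x, dB x =
       ((N0 N r0 x + Np N r0 x)%:C * (B x).1 + lam * (B x).2,
        lam * (B x).1 - (N0 N r0 x + Np N r0 x)%:C * (B x).2)}.

Definition transf_weight (N r0 w : R -> R) (x : R) : R :=
  expR (w x + \int[mu]_(y in `]-oo, x]) Np N r0 y).

End Defs.

(* Main.v *)
Require Import Defs.
From HB Require Import structures.
From mathcomp Require Import all_boot all_order all_algebra.
From mathcomp Require Import all_classical all_reals all_analysis.
From mathcomp Require Import complex.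
From mathcomp Require Import ring lra.
Import Order.TTheory GRing.Theory Num.Theory.
Import numFieldNormedType.Exports.
Set Implicit Arguments. Unset Strict Implicit. Unset Printing Implicit Defensive.
Local Open Scope classical_set_scope.
Local Open Scope ring_scope.

Section Gen.
Variable R : realType.
Notation mu := (@lebesgue_measure R).
Implicit Types (f g h : R -> R) (x y z d : R).

Definition hasD (f f' : R -> R) := forall x : R, is_derive x (1:R) f (f' x).

Lemma der1E f z d : is_derive z 1 f d -> derive1 f z = d.
Proof. by move=> hd; rewrite derive1E derive_val. Qed.

Lemma isD_cont f z d : is_derive z 1 f d -> {for z, continuous f}.
Proof. by move=> [hd _]; apply/differentiable_continuous/derivable1_diffP. Qed.

Lemma hasD_cont f f' : hasD f f' -> continuous f.
Proof. move=> h x; have := isD_cont (h x); exact. Qed.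

Lemma isD_eq f x d (d' : R) : is_derive x 1 f d -> d = d' -> is_derive x 1 f d'.
Proof. by move=> ? <-. Qed.

Lemma mono_le_stop : True. Proof. exact I. Qed.
Lemma mono_le f f' x y : x <= y ->
  (forall z, x <= z <= y -> is_derive z 1 f (f' z)) ->
  (forall z, x < z < y -> 0 <= f' z) -> f x <= f y.
Proof.
move=> xy hd hp.
apply: (@ger0_derive1_ndecr R f x y); last 3 first.
- exact: lexx.
- exact: xy.
- exact: lexx.
- move=> z; rewrite in_itv/= => /andP[a b].
  by have [] := hd z; rewrite ?(ltW a) ?(ltW b).
- move=> z; rewrite in_itv/= => /andP[a b].
  have zz : x <= z <= y by rewrite (ltW a) (ltW b).
  rewrite (der1E (hd z zz)); apply: hp; by rewrite a b.
- apply: continuous_in_subspaceT => z; rewrite inE /= in_itv/= => zz.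
  exact: (isD_cont (hd z zz)).
Qed.
Lemma mono_ge f f' x y : x <= y ->
  (forall z, x <= z <= y -> is_derive z 1 f (f' z)) ->
  (forall z, x < z < y -> f' z <= 0) -> f y <= f x.
Proof.
move=> xy hd hp; rewrite -lerN2.
apply: (@mono_le (fun t => - f t) (fun t => - f' t) x y xy).
  by move=> z zz; apply: is_deriveN; exact: hd.
by move=> z zz; rewrite oppr_ge0; exact: hp.
Qed.

Lemma const_eq f f' x y : x <= y ->
  (forall z, x <= z <= y -> is_derive z 1 f (f' z)) ->
  (forall z, x < z < y -> f' z = 0) -> f x = f y.
Proof.
move=> xy hd hz; apply/le_anti/andP; split.
  by apply: (mono_le xy hd) => z /hz ->.
by apply: (mono_ge xy hd) => z /hz ->.
Qed.
Lemma cont_int (f : R -> R) a b : continuous f ->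
  mu.-integrable `[a, b] (EFin \o f).
Proof.
move=> cf; apply: continuous_compact_integrable; first exact: segment_compact.
exact: continuous_subspaceT.
Qed.

Lemma ftc1 (f : R -> R) T x : continuous f -> T < x ->
  is_derive x 1 (fun t => \int[mu]_(s in `[T, t]) f s) (f x).
Proof.
move=> cf Tx.
have xx : x < x + 1 by rewrite ltrDl.
have [d1 d2] := @continuous_FTC1_closed R f T x (x + 1) xx
  (cont_int T (x+1) cf) Tx (cf x).
apply: isD_eq (derivableP d1) _; by rewrite -derive1E d2.
Qed.

Lemma ftcNy (f : R -> R) x : continuous f ->
  (forall u, mu.-integrable `]-oo, u] (EFin \o f)) ->
  is_derive x 1 (fun t => \int[mu]_(s in `]-oo, t]) f s) (f x).
Proof.
move=> cf fi.
have xx : x < x + 1 by rewrite ltrDl.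
have [d1 d2] := @continuous_FTC1 R f (BInfty R true) x (x + 1) xx
  (fi (x+1)) (ltNyr x) (cf x).
apply: isD_eq (derivableP d1) _; by rewrite -derive1E d2.
Qed.

Lemma ftc2 (F f : R -> R) a b : hasD F f -> continuous f -> a <= b ->
  \int[mu]_(x in `[a, b]) f x = F b - F a.
Proof.
move=> dF cf; rewrite le_eqVlt => /predU1P[<-|ab].
  by rewrite set_itv1 Rintegral_set1 subrr.
rewrite /Rintegral (@continuous_FTC2 R f F a b ab) //.
- exact: continuous_subspaceT.
- split.
  + by move=> z _; case: (dF z).
  + exact/cvg_at_right_filter/(hasD_cont dF).
  + exact/cvg_at_left_filter/(hasD_cont dF).
- by move=> z _; rewrite (der1E (dF z)).
Qed.
Definition L2 (h : R -> R) : Prop :=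
  measurable_fun setT h /\ (\int[mu]_x ((h x) ^+ 2)%:E < +oo)%E.

Lemma sq_int (h : R -> R) : L2 h -> mu.-integrable setT (EFin \o (fun x => h x ^+ 2)).
Proof.
move=> [mh hi]; apply/integrableP; split.
  by apply/measurable_realfun.measurable_EFinP; exact: measurable_realfun.measurable_funX.
under eq_integral do rewrite /= ger0_norm ?sqr_ge0//.
exact: hi.
Qed.

Lemma L2_le2 (f g h : R -> R) (k : R) : L2 f -> L2 g -> measurable_fun setT h ->
  0 <= k -> (forall x, h x ^+ 2 <= k * (f x ^+ 2 + g x ^+ 2)) -> L2 h.
Proof.
move=> Lf Lg mh k0 hle; split => //.
have mf2 : measurable_fun setT (fun x => f x ^+ 2) by apply: measurable_realfun.measurable_funX; case: Lf.
have mg2 : measurable_fun setT (fun x => g x ^+ 2) by apply: measurable_realfun.measurable_funX; case: Lg.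
apply: (@le_lt_trans _ _ (\int[mu]_x (k%:E * ((f x ^+ 2)%:E + (g x ^+ 2)%:E)))%E).
  apply: ge0_le_integral => //.
  - by move=> x _; rewrite lee_fin sqr_ge0.
  - by apply/measurable_realfun.measurable_EFinP; exact: measurable_realfun.measurable_funX.
  - apply: emeasurable_funM; first exact: measurable_cst.
    by apply: emeasurable_funD; apply/measurable_realfun.measurable_EFinP.
  - by move=> x _; rewrite -EFinD -EFinM lee_fin.
have h0f : forall x, setT x -> (0 <= (f x ^+ 2)%:E)%E by move=> x _; rewrite lee_fin sqr_ge0.
have h0g : forall x, setT x -> (0 <= (g x ^+ 2)%:E)%E by move=> x _; rewrite lee_fin sqr_ge0.
have h0 : forall x, setT x -> (0 <= (f x ^+ 2)%:E + (g x ^+ 2)%:E)%E.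
  by move=> x _; rewrite adde_ge0 // lee_fin sqr_ge0.
have mf2' := (measurable_realfun.measurable_EFinP _ _).2 mf2.
have mg2' := (measurable_realfun.measurable_EFinP _ _).2 mg2.
have m2 := emeasurable_funD mf2' mg2'.
rewrite ge0_integralZl_EFin // ge0_integralD //.
apply: lte_mul_pinfty => //.
by rewrite lte_add_pinfty //; [case: Lf|case: Lg].
Qed.

Lemma L2_add f g : L2 f -> L2 g -> L2 (fun x => f x + g x).
Proof.
move=> Lf Lg; apply: (L2_le2 (k := 2) Lf Lg).
- by apply: measurable_realfun.measurable_funD; [case: Lf|case: Lg].
- by [].
- move=> x; have := sqr_ge0 (f x - g x).
  rewrite !sqrrD !sqrrN => h; nra.
Qed.

Lemma L2_mul (c f : R -> R) (M : R) : L2 f -> measurable_fun setT c -> (forall x, `|c x| <= M) ->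
  L2 (fun x => c x * f x).
Proof.
move=> Lf mc cM; have M0 : 0 <= M by apply: le_trans (cM 0).
apply: (L2_le2 (k := M ^+ 2) Lf Lf).
- by apply: measurable_realfun.measurable_funM => //; case: Lf.
- exact: sqr_ge0.
- move=> x; rewrite exprMn.
  have : c x ^+ 2 <= M ^+ 2.
    by rewrite -real_normK ?num_real // lerXn2r // ?nnegrE.
  have := sqr_ge0 (f x); nra.
Qed.

Lemma L2_loc_int g a b : L2 g -> mu.-integrable `[a, b] (EFin \o g).
Proof.
move=> Lg.
apply: (@le_integrable _ _ _ mu _ _ _ (EFin \o (fun x => 1 + g x ^+ 2))) => //.
- by apply/measurable_realfun.measurable_EFinP; apply: measurable_funS (proj1 Lg).
- move=> x _ /=; rewrite lee_fin [X in _ <= X]ger0_norm ?addr_ge0 ?sqr_ge0 //.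
  have [g1|g1] := leP `|g x| 1; first by rewrite (le_trans g1) // lerDl sqr_ge0.
  have h1 : `|g x| <= `|g x| ^+ 2 by rewrite expr2 ler_peMr // ltW.
  rewrite real_normK ?num_real // in h1; lra.
- have -> : EFin \o (fun x => 1 + g x ^+ 2) = (EFin \o cst 1) \+ (EFin \o (fun x => g x ^+ 2)).
    by apply/funext => x.
  apply: integrableD => //; first by apply: cont_int; exact: cst_continuous.
  by apply: integrableS (sq_int Lg).
Qed.
Definition WD (f g : R -> R) := forall a b, a <= b -> f b - f a = \int[mu]_(x in `[a, b]) g x.

Lemma WD_cont f g : WD f g -> L2 g -> continuous f.
Proof.
move=> wd Lg x.
pose a := x - 1; pose b := x + 1.
have ab : a < b by rewrite /a /b; lra.
have ax : a < x by rewrite /a; lra.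
have xb : x < b by rewrite /b; lra.
pose F y := \int[mu]_(t in `[a, y]) g t.
have cF := @parameterized_integral_continuous R a b g (ltW ab) (L2_loc_int a b Lg).
have [cFin _ _] := (continuous_within_itvP _ ab).1 cF.
have cFx : {for x, continuous F}.
  by apply: cFin; rewrite in_itv /= ax xb.
have e : \forall y \near x, f a + F y = f y.
  near=> y; rewrite /F -wd; first by rewrite addrC subrK.
  by apply: ltW; near: y; exact: lt_nbhsr.
apply: cvg_trans (near_eq_cvg e) _.
have -> : f x = f a + F x by rewrite (nbhs_singleton e).
apply: cvgD; first exact: cvg_cst.
exact: cFx.
Unshelve. all: by end_near.
Qed.

Lemma WD_der f g h : WD f g -> L2 g -> {ae mu, forall x, g x = h x} ->
  continuous h -> forall x, is_derive x 1 f (h x).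
Proof.
move=> wd Lg ae ch x.
have wd' : forall a b, a <= b -> f b - f a = \int[mu]_(t in `[a, b]) h t.
  move=> a b ab; rewrite wd // /Rintegral; congr fine.
  apply: ae_eq_integral => //.
  - by apply/measurable_realfun.measurable_EFinP; apply: measurable_funS (proj1 Lg).
  - apply/measurable_realfun.measurable_EFinP; apply: measurable_funS (measurable_realfun.continuous_measurable_fun ch) => //.
  - apply: filterS ae; first exact: (ae_filter_ringOfSetsType mu).
    by move=> t /= -> _.
pose a := x - 1.
have ax : a < x by rewrite /a; lra.
have d := ftc1 ch ax.
have d2 := is_deriveD (is_derive_cst (f a) x 1) d.
rewrite add0r in d2.
apply: near_eq_is_derive d2.
near=> y.
have ay : a <= y by apply: ltW; near: y; exact: lt_nbhsr.
apply/esym; rewrite -(subrK (f a) (f y)) (wd' a y ay) addrC //.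
Unshelve. all: by end_near.
Qed.

Lemma der_WD f f' : hasD f f' -> continuous f' -> WD f f'.
Proof. by move=> df cf a b ab; rewrite (ftc2 df cf ab). Qed.
Lemma derivable_isD f x : derivable f x 1 -> is_derive x 1 f (derive1 f x).
Proof. by move=> d; rewrite derive1E; exact: derivableP. Qed.

Lemma lin_pos (y a : R -> R) : hasD y (fun x => a x * y x) -> continuous a ->
  0 < y 0 -> forall x, 0 < y x.
Proof.
move=> dy ca y0 x.
pose T := - (`|x| + 1).
have T0 : T < 0 by rewrite /T; have := normr_ge0 x; lra.
have Tx : T < x by rewrite /T; have := ler_norm (- x); rewrite normrN; lra.
pose A t := \int[mu]_(s in `[T, t]) a s.
pose v t := y t * expR (- A t).
have dv : forall t, T < t -> is_derive t 1 v 0.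
  move=> t Tt.
  have dA := ftc1 ca Tt.
  have dE : is_derive t 1 (fun s => expR (- A s)) (expR (- A t) * (- a t)).
    have h1 : is_derive (- A t) 1 expR (expR (- A t)) by exact: is_derive_expR.
    have h2 : is_derive t 1 (fun s => - A s) (- a t) by exact: is_deriveN.
    exact: (@is_derive1_comp R expR (fun s => - A s) t (expR (- A t)) (- a t) h1 h2).
  apply: isD_eq (is_deriveM (dy t) dE) _.
  rewrite /GRing.scale /=; ring.
have key : forall p q, T < p -> p <= q -> v p = v q.
  move=> p q Tp pq; apply: (@const_eq v (fun _ => 0) p q pq) => // z /andP[pz _].
  by apply: dv; lra.
have vx : v x = v 0.
  have [x0|x0] := leP x 0; first exact: key.
  by apply/esym/key => //; apply: ltW.
have : 0 < v x by rewrite vx /v mulr_gt0 // expR_gt0.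
by rewrite /v pmulr_lgt0 // expR_gt0.
Qed.
End Gen.

Section Traj.
Variable R : realType.
Notation mu := (@lebesgue_measure R).
Variables (N r0 : R -> R).
Hypothesis hN : nonlinearity N.
Hypothesis hr0 : is_r0 N r0.
Local Notation N1 := (derive1 N).
Local Notation N2 := (derive1 (derive1 N)).
Local Notation n0 := (N0 N r0).
Local Notation np := (Np N r0).

Lemma dN : hasD N N1.
Proof. by case: hN => hs _ _ _ _ x; apply: derivable_isD; exact: (hs 0%N x). Qed.

Lemma dN1 : hasD N1 N2.
Proof. by case: hN => hs _ _ _ _ x; apply: derivable_isD; exact: (hs 1%N x). Qed.

Lemma cN2 : continuous N2.
Proof.
case: hN => hs _ _ _ _; apply: (@hasD_cont _ _ (derive1 N2)) => x.
by apply: derivable_isD; exact: (hs 2%N x).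
Qed.

Lemma cN : continuous N. Proof. exact: hasD_cont dN. Qed.
Lemma cN1 : continuous N1. Proof. exact: hasD_cont dN1. Qed.

Lemma N1neg s : 0 < s -> N1 s < 0.
Proof. by case: hN => _ h _ _ _; exact: h. Qed.

Lemma N_0 : N 0 = 1. Proof. by case: hN. Qed.
Lemma N_1 : N 1 = 0. Proof. by case: hN. Qed.

Lemma Ndec s t : 0 <= s -> s < t -> N t < N s.
Proof.
move=> s0 st.
have cNw : {within `[s, t], continuous N} by apply: continuous_subspaceT; exact: cN.
have [c cst E] := @MVT R N N1 s t st (fun z _ => dN z) cNw.
rewrite -subr_lt0 E.
have c0 : 0 < c by move: cst; rewrite in_itv /= => /andP[+ _]; apply: le_lt_trans.
by rewrite nmulr_rlt0 ?subr_gt0 // N1neg.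
Qed.

Lemma Nle s t : 0 <= s -> s <= t -> N t <= N s.
Proof.
move=> s0; rewrite le_eqVlt => /predU1P[->//|st].
exact/ltW/Ndec.
Qed.

Lemma du : hasD r0 (fun x => r0 x * n0 x).
Proof.
move=> x; case: hr0 => h _; case: (h x) => dx ex.
by apply: isD_eq (derivable_isD dx) _; rewrite ex.
Qed.

Lemma cu : continuous r0. Proof. exact: hasD_cont du. Qed.

Lemma ds : hasD (fun x => r0 x ^+ 2) (fun x => 2 * r0 x ^+ 2 * n0 x).
Proof.
move=> x; have := is_deriveM (du x) (du x).
move=> h; apply: isD_eq h _.
by rewrite /GRing.scale /=; ring.
Qed.

Lemma cs : continuous (fun x => r0 x ^+ 2). Proof. exact: hasD_cont ds. Qed.

Lemma cN0 : continuous n0.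
Proof. move=> x; have := continuous_comp (@cs x) (@cN _); exact. Qed.

Lemma cNp : continuous np.
Proof.
move=> x; have h1 := continuous_comp (@cs x) (@cN1 _).
have := continuousM h1 (@cs x); exact.
Qed.

Lemma dN0 : hasD n0 (fun x => 2 * np x * n0 x).
Proof.
move=> x.
have h := @is_derive1_comp R N (fun t => r0 t ^+ 2) x _ _ (dN (r0 x ^+ 2)) (ds x).
apply: isD_eq h _.
by rewrite /Np; ring.
Qed.
Lemma r0_0 : r0 0 = 2^-1. Proof. by case: hr0. Qed.

Lemma u_pos x : 0 < r0 x.
Proof.
apply: (@lin_pos R r0 n0) => //; first by move=> t; apply: isD_eq (du t) _; rewrite mulrC.
  exact: cN0.
by rewrite r0_0.
Qed.

Lemma N0_pos x : 0 < n0 x.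
Proof.
apply: (@lin_pos R n0 (fun t => 2 * np t)) => //.
- by move=> t; apply: isD_eq (dN0 t) _.
- move=> t; have := continuousM (@cst_continuous _ _ (2:R) t) (@cNp t); exact.
- rewrite /N0 r0_0 -N_1; apply: Ndec; first by rewrite sqr_ge0.
  by rewrite expr2 -invfM; rewrite invf_lt1 //; lra.
Qed.

Lemma s_lt1 x : r0 x ^+ 2 < 1.
Proof.
rewrite ltNge; apply/negP => h.
have := N0_pos x; rewrite /N0.
have := Nle (@ler01 R) h; rewrite N_1 => ?; lra.
Qed.

Lemma s_pos x : 0 < r0 x ^+ 2.
Proof. by rewrite exprn_gt0 // u_pos. Qed.

Lemma N0_le1 x : n0 x <= 1.
Proof. by rewrite /N0 -N_0; apply: Nle => //; rewrite sqr_ge0. Qed.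

Lemma u_incr x y : x <= y -> r0 x <= r0 y.
Proof.
move=> xy; apply: (mono_le xy (fun z _ => du z)) => z _.
by rewrite ltW // mulr_gt0 // ?u_pos ?N0_pos.
Qed.

Lemma s_ge x : 0 <= x -> 4^-1 <= r0 x ^+ 2.
Proof.
move=> x0; have := u_incr x0; rewrite r0_0 => h.
have h2 : 2^-1 ^+ 2 <= r0 x ^+ 2 by rewrite lerXn2r // ?nnegrE ?invr_ge0 // ltW // u_pos.
rewrite expr2 in h2; lra.
Qed.

Lemma Np_neg x : np x < 0.
Proof. by rewrite /Np nmulr_rlt0 ?s_pos // N1neg // s_pos. Qed.

Lemma N0_decr x y : x <= y -> n0 y <= n0 x.
Proof.
move=> xy; apply: (mono_ge xy (fun z _ => dN0 z)) => z _.
have := Np_neg z; have := N0_pos z; nra.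
Qed.

Lemma Np_bound : exists M, forall x, `|np x| <= M.
Proof.
have cw : {within `[0, 1], continuous N1} by apply: continuous_subspaceT; exact: cN1.
have [c c01 cmin] := EVT_min (@ler01 R) cw.
exists (- N1 c) => x.
have sx := s_pos x; have s1 := s_lt1 x.
have hs : r0 x ^+ 2 \in `[0, 1] by rewrite in_itv /= ltW // ltW.
have h1 := cmin _ hs.
have h2 := N1neg sx.
rewrite ler0_norm; last exact/ltW/Np_neg.
rewrite /Np.
have : N1 (r0 x ^+ 2) <= N1 (r0 x ^+ 2) * r0 x ^+ 2.
  by rewrite ler_nMr // ltW.
lra.
Qed.
Lemma Np_int_val u :
  exists v : R, (\int[mu]_(x in `]-oo, u]) (- np x)%:E = v%:E)%E.
Proof.
pose G := fun x => - np x.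
have cG : continuous G by move=> x; apply: continuousN; exact: cNp.
have G0 : forall x, (0 <= G x)%R by move=> x; rewrite /G oppr_ge0 ltW // Np_neg.
have h1 := @ge0_integration_by_substitutionNy R G (- u)%R.
rewrite opprK in h1.
rewrite /G in h1; rewrite h1; last 2 first.
  - by apply: continuous_subspaceT; exact: cG.
  - by move=> x _; exact: G0.
pose F := ((2^-1 : R) \*: (@ln R \o (n0 \o -%R)))%R.
have dF : hasD F (G \o -%R).
  move=> x.
  have p := N0_pos (- x).
  have d1 : is_derive x 1 (n0 \o -%R) (2 * np (- x) * n0 (- x) * -1)%R.
    exact: (@is_derive1_comp R n0 -%R x _ _ (dN0 (- x)) (is_deriveNid x 1)).
  have d2 := @is_derive1_comp R (@ln R) (n0 \o -%R) x _ _ (is_derive1_ln p) d1.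
  have d3 := is_deriveZ (2^-1 : R) d2.
  apply: isD_eq d3 _; rewrite /G /= /GRing.scale /=.
  by field; rewrite gt_eqF.
have Fnd : {homo F : x y / (x <= y)%R}.
  move=> x y xy; apply: (mono_le xy (fun z _ => dF z)) => z _.
  exact: G0.
have Fub : has_ubound (range F).
  exists 0%R => _ [x _ <-]; rewrite /F /= /GRing.scale /=.
  rewrite pmulr_rle0 ?invr_gt0 //; apply: ln_le0; exact: N0_le1.
have Fl := nondecreasing_cvgr Fnd Fub.
rewrite (@ge0_continuous_FTC2y R (G \o -%R) F (- u)%R _ _ _ Fl).
- by eexists; rewrite -EFinB.
- by move=> x _; exact: G0.
- by apply: continuous_subspaceT => x; apply: continuous_comp; [exact: continuousN | exact: cG].
- by move=> x _; case: (dF x).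
- exact/cvg_at_right_filter/(hasD_cont dF).
- by move=> x _; rewrite (der1E (dF x)).
Qed.
Lemma Np_int u : mu.-integrable `]-oo, u] (EFin \o np).
Proof.
apply/integrableP; split.
  apply/measurable_realfun.measurable_EFinP.
  apply: measurable_funS (measurable_realfun.continuous_measurable_fun cNp) => //.
have [v hv] := Np_int_val u.
rewrite (_ : (fun x => `|(EFin \o np) x|)%E = (fun x => (- np x)%:E)); last first.
  by apply/funext => x /=; rewrite ltr0_norm // Np_neg.
by rewrite hv ltey.
Qed.

Lemma I_der (x : R) : is_derive x 1 (fun t => \int[mu]_(s in `]-oo, t]) np s) (np x).
Proof. exact: ftcNy cNp Np_int. Qed.
End Traj.

Section W.
Variable R : realType.
Notation mu := (@lebesgue_measure R).
Variables (N r0 w : R -> R).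
Hypothesis hN : nonlinearity N.
Hypothesis hr0 : is_r0 N r0.
Hypothesis hw : is_weight N w.
Local Notation N1 := (derive1 N).
Local Notation N2 := (derive1 (derive1 N)).
Local Notation n0 := (N0 N r0).
Local Notation np := (Np N r0).
Local Notation I := (fun t => \int[mu]_(s in `]-oo, t]) np s).
Local Notation K := (Kconst N).

Lemma I_le0 x : I x <= 0.
Proof.
have h := Np_int hN hr0 x.
have : 0 <= \int[mu]_(s in `]-oo, x]) (-1 * np s).
  apply: Rintegral_ge0 => s _; rewrite mulN1r oppr_ge0; exact/ltW/(Np_neg hN hr0).
rewrite RintegralZl //; lra.
Qed.

Lemma I_decr x y : x <= y -> I y <= I x.
Proof.
move=> xy; apply: (mono_ge xy (fun z _ => I_der hN hr0 z)) => z _.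
exact/ltW/(Np_neg hN hr0).
Qed.

Lemma cI : continuous I.
Proof. exact: (hasD_cont (I_der hN hr0)). Qed.

Lemma w_der (x : R) : is_derive x 1 w (derive1 w x).
Proof. by case: hw => [[dw _] _ _]; exact: derivable_isD. Qed.

Lemma cw : continuous w. Proof. exact: hasD_cont w_der. Qed.
Lemma cw' : continuous (derive1 w). Proof. by case: hw => [[_ c] _ _]. Qed.

Lemma w_neg x : x <= -1 -> w x = 0. Proof. by case: hw => _ h _; exact: h. Qed.
Lemma w_pos x : 1 <= x -> w x = K * x. Proof. by case: hw => _ _ h; exact: h. Qed.
Lemma w'_pos x : 1 < x -> derive1 w x = K.
Proof.
move=> x1.
have e : \forall t \near x, w t = K * t.
  near=> t; apply: w_pos; apply: ltW; near: t; exact: lt_nbhsr.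
have h : is_derive x 1 (fun t => K * t) K.
  by apply: isD_eq (is_deriveZ K (is_derive_id x 1)) _; rewrite /GRing.scale /= mulr1.
by rewrite derive1E (near_eq_derive _ e) derive_val.
Unshelve. all: by end_near.
Qed.

Lemma w'_neg x : x < -1 -> derive1 w x = 0.
Proof.
move=> x1.
have e : \forall t \near x, w t = cst 0 t.
  near=> t; apply: w_neg; apply: ltW; near: t; exact: lt_nbhsl.
by rewrite derive1E (near_eq_derive _ e) derive_val.
Unshelve. all: by end_near.
Qed.

Lemma w'_bound : exists M, forall x, `|derive1 w x| <= M.
Proof.
have cw1 : {within `[-1, 1], continuous (fun t => `|derive1 w t|)}.
  apply: continuous_subspaceT => t; apply: continuous_comp; first exact: cw'.
  exact: norm_continuous.
have m11 : (-1 : R) <= 1 by lra.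
have [c _ cmax] := EVT_max m11 cw1.
exists (Num.max `|derive1 w c| `|K|) => x.
have [x1|x1] := ltP x (-1).
  by rewrite w'_neg // normr0 le_max normr_ge0.
have [x2|x2] := ltP 1 x.
  by rewrite w'_pos // le_max lexx orbT.
by rewrite le_max cmax // in_itv /= x1 x2.
Qed.
Lemma key_ineq : exists A c : R, 0 <= A /\ 0 < c /\
  forall x, 0 <= x -> `|K + np x| <= A * n0 x /\ np x <= - (c / 4).
Proof.
have q1 : (4^-1 : R) <= 1 by rewrite invf_le1 //; lra.
have q0 : (0 : R) < 4^-1 by rewrite invr_gt0; lra.
have cw1 : {within `[4^-1, 1], continuous N1}.
  by apply: continuous_subspaceT; exact: (cN1 hN).
have [c1 c1in c1max] := EVT_max q1 cw1.
have c1pos : 0 < c1 by move: c1in; rewrite in_itv /= => /andP[h _]; lra.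
pose c := - N1 c1.
have c0 : 0 < c by rewrite /c oppr_gt0 (N1neg hN).
pose g' := fun t => N1 t + t * N2 t.
have cg' : continuous g'.
  move=> t; have h1 := continuousM (@cvg_id _ (nbhs t)) (@cN2 _ _ hN t).
  have := continuousD (@cN1 _ _ hN t) h1; exact.
have cw2 : {within `[4^-1, 1], continuous (fun t => `|g' t|)}.
  apply: continuous_subspaceT => t; apply: continuous_comp; first exact: cg'.
  exact: norm_continuous.
have [c2 _ c2max] := EVT_max q1 cw2.
pose L := `|g' c2|.
have dg : hasD (fun t => t * N1 t) g'.
  move=> t; apply: isD_eq (is_deriveM (is_derive_id t 1) (dN1 hN t)) _.
  by rewrite /g' /GRing.scale /=; ring.
have Ac : 0 <= L / c by apply: divr_ge0; [exact: normr_ge0 | exact: ltW].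
exists (L / c), c; split; first exact: Ac.
split => // x x0.
pose s := r0 x ^+ 2.
have s4 : 4^-1 <= s by exact: (s_ge hN hr0 x0).
have s1 : s < 1 by exact: (s_lt1 hN hr0).
have sin : forall z, s < z < 1 -> z \in `[4^-1, 1].
  by move=> z /andP[a b]; rewrite in_itv /=; apply/andP; split; lra.
have cgw : {within `[s, 1], continuous (fun t => t * N1 t)}.
  by apply: continuous_subspaceT; exact: (hasD_cont dg).
have [xi xin Exi] := @MVT R (fun t => t * N1 t) g' s 1 s1 (fun z _ => dg z) cgw.
have hi : `|K + np x| <= L * (1 - s).
  have -> : K + np x = - (g' xi * (1 - s)).
    rewrite -Exi /Kconst /Np -/s mul1r; ring.
  rewrite normrN normrM [`|1 - s|]ger0_norm; last lra.
  apply: ler_wpM2r; first lra.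
  apply: c2max; apply: sin; move: xin; rewrite in_itv /=; done.
have cNw : {within `[s, 1], continuous N} by apply: continuous_subspaceT; exact: (cN hN).
have [xi2 xin2 Exi2] := @MVT R N N1 s 1 s1 (fun z _ => dN hN z) cNw.
have hii : c * (1 - s) <= n0 x.
  have -> : n0 x = - N1 xi2 * (1 - s).
    by rewrite /N0 -/s; move: Exi2; rewrite (N_1 hN); lra.
  apply: ler_wpM2r; first lra.
  rewrite /c lerN2; apply: c1max; apply: sin; move: xin2; rewrite in_itv /=; done.
split.
  apply: (le_trans hi).
  have -> : L * (1 - s) = L / c * (c * (1 - s)) by field; rewrite gt_eqF.
  exact: ler_wpM2l.
have hs : N1 s <= - c.
  rewrite /c opprK; apply: c1max; rewrite in_itv /=; apply/andP; split; lra.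
rewrite /Np -/s.
have sp : 0 < s by lra.
have e4 : (4^-1 : R) = 1 / 4 by rewrite div1r.
rewrite e4 in s4.
nra.
Qed.
Lemma Psi_bound : exists B, forall x, 1 <= x -> `|K * x + I x - (K + I 1)| <= B.
Proof.
have [A [c [A0 [c0 key]]]] := key_ineq.
pose k := 2 * A / c.
have k0 : 0 <= k by rewrite /k; apply: divr_ge0; [lra | exact: ltW].
have sgn : forall t, 0 <= t -> K + np t + k * (2 * np t * n0 t) <= 0 /\
                              0 <= K + np t - k * (2 * np t * n0 t).
  move=> t t0; have [h1 h2] := key t t0; have b0 := N0_pos hN hr0 t.
  have hab : np t * n0 t <= -(c/4) * n0 t by nra.
  have k4 : 0 <= 4 * A / c by apply: divr_ge0; [lra | exact: ltW].
  have h3 : 4 * A / c * (np t * n0 t) <= 4 * A / c * (-(c/4) * n0 t) by nra.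
  have e1 : k * (2 * np t * n0 t) = 4 * A / c * (np t * n0 t).
    by rewrite /k; field; rewrite gt_eqF.
  have e2 : 4 * A / c * (-(c/4) * n0 t) = - (A * n0 t) by field; rewrite gt_eqF.
  move: h1; rewrite ler_norml => /andP[h1 h1'].
  rewrite e1; split; lra.
have dK : forall t : R, is_derive t 1 (fun t => K * t) K.
  by move=> t; apply: isD_eq (is_deriveZ K (is_derive_id t 1)) _; rewrite /GRing.scale /= mulr1.
have dPp : forall t : R, is_derive t 1 (fun t => K * t + I t + k * n0 t)
    (K + np t + k * (2 * np t * n0 t)).
  move=> t; apply: isD_eq (is_deriveD (is_deriveD (dK t) (I_der hN hr0 t))
    (is_deriveZ k (dN0 hN hr0 t))) _.
  by rewrite /GRing.scale /=.
have dPm : forall t : R, is_derive t 1 (fun t => K * t + I t - k * n0 t)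
    (K + np t - k * (2 * np t * n0 t)).
  move=> t; apply: isD_eq (is_deriveB (is_deriveD (dK t) (I_der hN hr0 t))
    (is_deriveZ k (dN0 hN hr0 t))) _.
  by rewrite /GRing.scale /=.
exists k => x x1.
have hp : K * x + I x + k * n0 x <= K * 1 + I 1 + k * n0 1.
  apply: (@mono_ge R (fun t => K * t + I t + k * n0 t)
    (fun t => K + np t + k * (2 * np t * n0 t)) 1 x x1).
  move=> z /andP[z1 _]; apply: (sgn z _).1; lra.
have hm : K * 1 + I 1 - k * n0 1 <= K * x + I x - k * n0 x.
  apply: (@mono_le R (fun t => K * t + I t - k * n0 t)
    (fun t => K + np t - k * (2 * np t * n0 t)) 1 x x1).
  move=> z /andP[z1 _]; apply: (sgn z _).2; lra.
have n1 := N0_le1 r0 hN 1; have n1p := N0_pos hN hr0 1.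
have nx := N0_le1 r0 hN x; have nxp := N0_pos hN hr0 x.
rewrite mulr1 in hp hm.
have kn1 : k * n0 1 <= k by rewrite -[X in _ <= X]mulr1; apply: ler_wpM2l.
have kn1' : 0 <= k * n0 1 by apply: mulr_ge0 => //; exact: ltW.
have knx : k * n0 x <= k by rewrite -[X in _ <= X]mulr1; apply: ler_wpM2l.
have knx' : 0 <= k * n0 x by apply: mulr_ge0 => //; exact: ltW.
rewrite ler_norml; apply/andP; split; lra.
Qed.
Lemma Lw_bound : exists lo hi, forall x, lo <= w x + I x <= hi.
Proof.
have [B hB] := Psi_bound.
have m11 : (-1 : R) <= 1 by lra.
have cL : continuous (fun t => w t + I t).
  move=> t; have := continuousD (@cw t) (@cI t); exact.
have cLw : {within `[-1, 1], continuous (fun t => w t + I t)} by exact: continuous_subspaceT.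
have [c1 _ c1min] := EVT_min m11 cLw.
have [c2 _ c2max] := EVT_max m11 cLw.
exists (Num.min (I (-1)) (Num.min (w c1 + I c1) (K + I 1 - B))).
exists (Num.max 0 (Num.max (w c2 + I c2) (K + I 1 + B))).
move=> x; apply/andP; split.
- rewrite !ge_min.
  have [x1|x1] := leP x (-1).
    by rewrite w_neg // add0r I_decr.
  have [x2|x2] := leP x 1.
    by rewrite c1min ?orbT // in_itv /= x2 ltW.
  have := hB x (ltW x2); rewrite ler_norml (w_pos (ltW x2)) => /andP[h _].
  apply/orP; right; apply/orP; right; lra.
- rewrite !le_max.
  have [x1|x1] := leP x (-1).
    by rewrite w_neg // add0r I_le0.
  have [x2|x2] := leP x 1.
    by rewrite c2max ?orbT // in_itv /= x2 ltW.
  have := hB x (ltW x2); rewrite ler_norml (w_pos (ltW x2)) => /andP[_ h].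
  apply/orP; right; apply/orP; right; lra.
Qed.

Local Notation E := (transf_weight N r0 w).

Lemma E_def x : E x = expR (w x + I x). Proof. by []. Qed.

Lemma E_pos x : 0 < E x. Proof. exact: expR_gt0. Qed.

Lemma E_bound : exists lo hi, 0 < lo /\ forall x, lo <= E x <= hi.
Proof.
have [lo [hi h]] := Lw_bound.
exists (expR lo), (expR hi); split; first exact: expR_gt0.
move=> x; rewrite E_def !ler_expR; exact: h.
Qed.

Lemma E_der (x : R) : is_derive x 1 E ((derive1 w x + np x) * E x).
Proof.
have d1 : is_derive x 1 (fun t => w t + I t) (derive1 w x + np x).
  exact: is_deriveD (w_der x) (I_der hN hr0 x).
have := @is_derive1_comp R expR (fun t => w t + I t) x _ _ (is_derive_expR _) d1.
by rewrite mulrC.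
Qed.

Lemma cE : continuous E. Proof. exact: hasD_cont E_der. Qed.
End W.

Local Open Scope complex_scope.
Section Cx.
Variable R : realType.
Notation mu := (@lebesgue_measure R).
Local Notation C := R[i].
Implicit Types (f g h : R -> C).

Lemma cplx_eq (z w : C) : complex.Re z = complex.Re w -> complex.Im z = complex.Im w -> z = w.
Proof. by case: z => a b; case: w => c d /= -> ->. Qed.

Lemma ReD (z w : C) : complex.Re (z + w) = complex.Re z + complex.Re w. Proof. by case: z; case: w. Qed.
Lemma ImD (z w : C) : complex.Im (z + w) = complex.Im z + complex.Im w. Proof. by case: z; case: w. Qed.
Lemma ReB (z w : C) : complex.Re (z - w) = complex.Re z - complex.Re w. Proof. by case: z; case: w. Qed.
Lemma ImB (z w : C) : complex.Im (z - w) = complex.Im z - complex.Im w. Proof. by case: z; case: w. Qed.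
Lemma ReM (z w : C) : complex.Re (z * w) = complex.Re z * complex.Re w - complex.Im z * complex.Im w.
Proof. by case: z; case: w. Qed.
Lemma ImM (z w : C) : complex.Im (z * w) = complex.Re z * complex.Im w + complex.Im z * complex.Re w.
Proof. by case: z => a b; case: w => c d /=; ring. Qed.
Lemma ReMc (a : R) (z : C) : complex.Re (a%:C * z) = a * complex.Re z.
Proof. by case: z => x y /=; ring. Qed.
Lemma ImMc (a : R) (z : C) : complex.Im (a%:C * z) = a * complex.Im z.
Proof. by case: z => x y /=; ring. Qed.

Definition Re_ f := fun x => complex.Re (f x).
Definition Im_ f := fun x => complex.Im (f x).

Definition Cc f := continuous (Re_ f) /\ continuous (Im_ f).
Definition CD f f' := forall x : R, is_derive x 1 (Re_ f) (complex.Re (f' x)) /\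
                                    is_derive x 1 (Im_ f) (complex.Im (f' x)).

Lemma aeS (P Q : R -> Prop) : (forall x, P x -> Q x) ->
  {ae mu, forall x, P x} -> {ae mu, forall x, Q x}.
Proof.
move=> PQ h; apply: filterS h; first exact: (ae_filter_ringOfSetsType mu).
exact: PQ.
Qed.

Lemma weak_iff f g : weak_deriv f g <-> WD (Re_ f) (Re_ g) /\ WD (Im_ f) (Im_ g).
Proof.
split.
  move=> h; split => a b ab; have := h a b ab; rewrite /Cint.
    by move=> /(congr1 (@complex.Re R)); rewrite ReB.
  by move=> /(congr1 (@complex.Im R)); rewrite ImB.
move=> [h1 h2] a b ab; apply: cplx_eq; rewrite /Cint /= ?ReB ?ImB.
  exact: h1.
exact: h2.
Qed.

Lemma weak_cont f g : weak_deriv f g -> L2C g -> Cc f.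
Proof.
move=> /weak_iff[h1 h2] [L1 L2]; split; [exact: WD_cont h1 L1 | exact: WD_cont h2 L2].
Qed.

Lemma weak_CD f g h : weak_deriv f g -> L2C g -> {ae mu, forall x, g x = h x} ->
  Cc h -> CD f h.
Proof.
move=> /weak_iff[h1 h2] [L1 L2] ae [c1 c2] x; split.
  apply: (WD_der (h := Re_ h) h1 L1) => //; apply: aeS ae => t; rewrite /Re_ => ->.
  done.
apply: (WD_der (h := Im_ h) h2 L2) => //; apply: aeS ae => t; rewrite /Im_ => ->.
done.
Qed.

Lemma CD_weak f f' : CD f f' -> Cc f' -> weak_deriv f f'.
Proof.
move=> d [c1 c2]; apply/weak_iff; split; apply: der_WD => //.
  by move=> x; exact: (d x).1.
by move=> x; exact: (d x).2.
Qed.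

Lemma CD_mulr (E e : R -> R) f f' : hasD E e -> CD f f' ->
  CD (fun x => (E x)%:C * f x) (fun x => (e x)%:C * f x + (E x)%:C * f' x).
Proof.
move=> dE d x; have [d1 d2] := d x; split.
  have h := is_deriveM (dE x) d1.
  have -> : Re_ (fun x => (E x)%:C * f x) = (E * Re_ f)%R.
    by apply/funext => t; rewrite /Re_ ReMc.
  apply: isD_eq h _; rewrite ReD !ReMc /Re_ /GRing.scale /=; ring.
have h := is_deriveM (dE x) d2.
have -> : Im_ (fun x => (E x)%:C * f x) = (E * Im_ f)%R.
  by apply/funext => t; rewrite /Im_ ImMc.
apply: isD_eq h _; rewrite ImD !ImMc /Im_ /GRing.scale /=; ring.
Qed.

Lemma Cc_mulr (c : R -> R) f : continuous c -> Cc f -> Cc (fun x => (c x)%:C * f x).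
Proof.
move=> cc [c1 c2]; split => x.
  have -> : Re_ (fun x => (c x)%:C * f x) = (c * Re_ f)%R.
    by apply/funext => t; rewrite /Re_ ReMc.
  exact: (continuousM (@cc x) (@c1 x)).
have -> : Im_ (fun x => (c x)%:C * f x) = (c * Im_ f)%R.
  by apply/funext => t; rewrite /Im_ ImMc.
exact: (continuousM (@cc x) (@c2 x)).
Qed.

Lemma Cc_add f g : Cc f -> Cc g -> Cc (fun x => f x + g x).
Proof.
move=> [f1 f2] [g1 g2]; split => x.
  have -> : Re_ (fun x => f x + g x) = (Re_ f + Re_ g)%R.
    by apply/funext => t; rewrite /Re_ ReD.
  exact: (continuousD (@f1 x) (@g1 x)).
have -> : Im_ (fun x => f x + g x) = (Im_ f + Im_ g)%R.
  by apply/funext => t; rewrite /Im_ ImD.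
exact: (continuousD (@f2 x) (@g2 x)).
Qed.

Lemma Cc_mulc (l : C) f : Cc f -> Cc (fun x => l * f x).
Proof.
move=> [f1 f2]; split => x.
  have -> : Re_ (fun x => l * f x) =
     ((cst (complex.Re l)) * Re_ f - (cst (complex.Im l)) * Im_ f)%R.
    by apply/funext => t; rewrite /Re_ /Im_ ReM.
  exact: (continuousB (continuousM (@cst_continuous _ _ _ x) (@f1 x)) (continuousM (@cst_continuous _ _ _ x) (@f2 x))).
have -> : Im_ (fun x => l * f x) =
     ((cst (complex.Re l)) * Im_ f + (cst (complex.Im l)) * Re_ f)%R.
  by apply/funext => t; rewrite /Re_ /Im_ ImM.
exact: (continuousD (continuousM (@cst_continuous _ _ _ x) (@f2 x)) (continuousM (@cst_continuous _ _ _ x) (@f1 x))).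
Qed.

Lemma L2C_mulr (c : R -> R) f M : L2C f -> continuous c -> (forall x, `|c x| <= M) ->
  L2C (fun x => (c x)%:C * f x).
Proof.
move=> [L1 L2] cc cM; have mc := measurable_realfun.continuous_measurable_fun cc.
split.
  have -> : (fun x => complex.Re ((c x)%:C * f x)) = (fun x => c x * Re_ f x).
    by apply/funext => t; rewrite ReMc.
  exact: (L2_mul L1 mc cM).
have -> : (fun x => complex.Im ((c x)%:C * f x)) = (fun x => c x * Im_ f x).
  by apply/funext => t; rewrite ImMc.
exact: (L2_mul L2 mc cM).
Qed.

Lemma L2C_add f g : L2C f -> L2C g -> L2C (fun x => f x + g x).
Proof.
move=> [f1 f2] [g1 g2]; split.
  have -> : (fun x => complex.Re (f x + g x)) = (fun x => Re_ f x + Re_ g x).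
    by apply/funext => t; rewrite ReD.
  exact: L2_add.
have -> : (fun x => complex.Im (f x + g x)) = (fun x => Im_ f x + Im_ g x).
  by apply/funext => t; rewrite ImD.
exact: L2_add.
Qed.

Lemma L2_cmul (k : R) (h : R -> R) : L2 h -> L2 (fun x => k * h x).
Proof.
move=> Lh; apply: (L2_mul (c := cst k) (M := `|k|) Lh) => //.
Qed.

Lemma L2C_mulc (l : C) f : L2C f -> L2C (fun x => l * f x).
Proof.
move=> [f1 f2]; split.
  have -> : (fun x => complex.Re (l * f x)) =
      (fun x => complex.Re l * Re_ f x + (- complex.Im l) * Im_ f x).
    by apply/funext => t; rewrite ReM /Re_ /Im_ mulNr.
  by apply: L2_add; apply: L2_cmul.
have -> : (fun x => complex.Im (l * f x)) =
    (fun x => complex.Re l * Im_ f x + complex.Im l * Re_ f x).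
  by apply/funext => t; rewrite ImM.
by apply: L2_add; apply: L2_cmul.
Qed.
End Cx.

Local Open Scope complex_scope.
Section Main.
Variable R : realType.
Notation mu := (@lebesgue_measure R).
Local Notation C := R[i].
Variables (N r0 w : R -> R).
Hypothesis hN : nonlinearity N.
Hypothesis hr0 : is_r0 N r0.
Hypothesis hw : is_weight N w.
Local Notation n0 := (N0 N r0).
Local Notation np := (Np N r0).
Local Notation E := (transf_weight N r0 w).
Local Notation w' := (derive1 w).
Implicit Types (f g : R -> R).

Definition bnd (f : R -> R) := exists M, forall x, `|f x| <= M.

Lemma bnd_add f g : bnd f -> bnd g -> bnd (fun x => f x + g x)%R.
Proof.
move=> [M hM] [M' hM']; exists (M + M')%R => x.
by rewrite (le_trans (ler_normD _ _)) // lerD.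
Qed.

Lemma bnd_mul f g : bnd f -> bnd g -> bnd (fun x => f x * g x)%R.
Proof.
move=> [M hM] [M' hM']; exists (M * M')%R => x.
rewrite normrM ler_pM //; exact: normr_ge0.
Qed.

Lemma bnd_cst (k : R) : bnd (fun _ => k).
Proof. by exists `|k|%R. Qed.

Lemma bnd_opp f : bnd f -> bnd (fun x => - f x)%R.
Proof. by move=> [M hM]; exists M => x; rewrite normrN. Qed.

Lemma b_w' : bnd w'. Proof. exact: (w'_bound hw). Qed.
Lemma b_np : bnd np. Proof. exact: (Np_bound hN hr0). Qed.
Lemma b_n0 : bnd n0.
Proof.
exists 1%R => x; rewrite ger0_norm; first exact: (N0_le1 r0 hN).
exact/ltW/(N0_pos hN hr0).
Qed.

Lemma c_w' : continuous w'. Proof. exact: (cw' hw). Qed.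
Lemma c_np : continuous np. Proof. exact: (cNp hN hr0). Qed.
Lemma c_n0 : continuous n0. Proof. exact: (cN0 hN hr0). Qed.

Definition ee x := (w' x + np x)%R.
Definition mm x := (n0 x + np x)%R.
Definition GG x := (E x)^-1%R.

Lemma c_add f g : continuous f -> continuous g -> continuous (fun x => f x + g x)%R.
Proof. by move=> cf cg x; exact: (continuousD (@cf x) (@cg x)). Qed.
Lemma c_mul f g : continuous f -> continuous g -> continuous (fun x => f x * g x)%R.
Proof. by move=> cf cg x; exact: (continuousM (@cf x) (@cg x)). Qed.
Lemma c_opp f : continuous f -> continuous (fun x => - f x)%R.
Proof. by move=> cf x; exact: (continuousN (@cf x)). Qed.

Lemma E_ne0 x : E x != 0%R. Proof. exact/lt0r_neq0/E_pos. Qed.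

Lemma b_E : bnd E.
Proof.
have [lo [hi [lo0 h]]] := E_bound hN hr0 hw.
exists hi => x; rewrite ger0_norm; first by have /andP[] := h x.
exact/ltW/E_pos.
Qed.

Lemma b_G : bnd GG.
Proof.
have [lo [hi [lo0 h]]] := E_bound hN hr0 hw.
exists lo^-1%R => x; rewrite /GG ger0_norm; last by rewrite invr_ge0 ltW // E_pos.
have /andP[h1 _] := h x.
by rewrite lef_pV2 // ?posrE // E_pos.
Qed.

Lemma dE : hasD E (fun x => ee x * E x)%R.
Proof. by move=> x; exact: (E_der hN hr0 hw x). Qed.

Lemma c_E : continuous E. Proof. exact: (cE hN hr0 hw). Qed.

Lemma dG : hasD GG (fun x => - ee x * GG x)%R.
Proof.
move=> x; have h := is_deriveV (E_ne0 x) (dE x).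
apply: isD_eq h _; rewrite /GG /GRing.scale /=.
by field; exact: E_ne0.
Qed.

Lemma c_G : continuous GG. Proof. exact: hasD_cont dG. Qed.

Lemma GE x : (GG x * E x = 1)%R. Proof. by rewrite /GG mulVf // E_ne0. Qed.
Variable lam : C.

Lemma fwd (Bt B : R -> C * C) :
  (forall x, Bt x = ((E x)%:C * (B x).1, (E x)%:C * (B x).2)) ->
  solves_ODE N r0 lam B -> is_eigenfunction N r0 w lam Bt.
Proof.
move=> hrel [dB [[LB1 LB2 LdB1 LdB2 [wd1 wd2]] ae]].
have cB1 := weak_cont wd1 LdB1.
have cB2 := weak_cont wd2 LdB2.
pose h1 x := (mm x)%:C * (B x).1 + lam * (B x).2.
pose h2 x := lam * (B x).1 + (- mm x)%:C * (B x).2.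
have ae1 : {ae mu, forall x, (dB x).1 = h1 x}.
  by apply: aeS ae => x ->.
have ae2 : {ae mu, forall x, (dB x).2 = h2 x}.
  apply: aeS ae => x -> /=; rewrite /h2 /mm rmorphN mulNr //.
have c_mm : continuous mm by apply: c_add; [exact: c_n0 | exact: c_np].
have b_mm : bnd mm by apply: bnd_add; [exact: b_n0 | exact: b_np].
have Cch1 : Cc h1 by apply: Cc_add; [exact: Cc_mulr | exact: Cc_mulc].
have Cch2 : Cc h2 by apply: Cc_add; [exact: Cc_mulc | apply: Cc_mulr => //; exact: c_opp].
have CD1 := weak_CD wd1 LdB1 ae1 Cch1.
have CD2 := weak_CD wd2 LdB2 ae2 Cch2.
have [ME hME] := b_E.
have [Mm hMm] := b_mm.
have c_ee : continuous ee by apply: c_add; [exact: c_w' | exact: c_np].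
have b_ee : bnd ee by apply: bnd_add; [exact: b_w' | exact: b_np].
have [MeE hMeE] : bnd (fun x => ee x * E x)%R by apply: bnd_mul => //; exact: b_E.
have c_eE : continuous (fun x => ee x * E x)%R by apply: c_mul => //; exact: c_E.
have [Mm' hMm'] : bnd (fun x => - mm x)%R by exact: bnd_opp.
have Lh1 : L2C h1 by apply: L2C_add; [exact: (L2C_mulr LB1 c_mm hMm) | exact: L2C_mulc].
have Lh2 : L2C h2 by apply: L2C_add; [exact: L2C_mulc | exact: (L2C_mulr LB2 (c_opp c_mm) hMm')].
have eB1 : (fun x => (Bt x).1) = (fun x => (E x)%:C * (B x).1) by apply/funext => x; rewrite hrel.
have eB2 : (fun x => (Bt x).2) = (fun x => (E x)%:C * (B x).2) by apply/funext => x; rewrite hrel.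
pose dBt x := ((ee x * E x)%R%:C * (B x).1 + (E x)%:C * h1 x,
               (ee x * E x)%R%:C * (B x).2 + (E x)%:C * h2 x).
exists dBt; split.
  split.
  - by rewrite eB1; exact: (L2C_mulr LB1 c_E hME).
  - by rewrite eB2; exact: (L2C_mulr LB2 c_E hME).
  - by apply: L2C_add; [exact: (L2C_mulr LB1 c_eE hMeE) | exact: (L2C_mulr Lh1 c_E hME)].
  - by apply: L2C_add; [exact: (L2C_mulr LB2 c_eE hMeE) | exact: (L2C_mulr Lh2 c_E hME)].
  - split.
    + rewrite eB1; apply: CD_weak; first exact: (CD_mulr dE CD1).
      by apply: Cc_add; apply: Cc_mulr => //; exact: c_E.
    + rewrite eB2; apply: CD_weak; first exact: (CD_mulr dE CD2).
      by apply: Cc_add; apply: Cc_mulr => //; exact: c_E.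
apply: aeW => x.
rewrite /Lstar /dBt /h1 /h2 /ee /mm !hrel /=.
congr (_, _); rewrite !(rmorphD, rmorphN, rmorphM, rmorphB) /=; ring.
Qed.
Lemma bwd (Bt B : R -> C * C) :
  (forall x, Bt x = ((E x)%:C * (B x).1, (E x)%:C * (B x).2)) ->
  is_eigenfunction N r0 w lam Bt -> solves_ODE N r0 lam B.
Proof.
move=> hrel [dBt [[L1 L2 Ld1 Ld2 [wd1 wd2]] ae]].
have cB1 := weak_cont wd1 Ld1.
have cB2 := weak_cont wd2 Ld2.
pose q1 x := (w' x + n0 x + 2 * np x)%R.
pose q2 x := (w' x - n0 x)%R.
pose k1 x := lam * (Bt x).2 + (q1 x)%:C * (Bt x).1.
pose k2 x := lam * (Bt x).1 + (q2 x)%:C * (Bt x).2.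
have ae1 : {ae mu, forall x, (dBt x).1 = k1 x}.
  apply: aeS ae => x /(congr1 snd) /= h.
  rewrite /k1 -h /q1; rewrite !(rmorphD, rmorphN, rmorphM, rmorphB) /=; ring.
have ae2 : {ae mu, forall x, (dBt x).2 = k2 x}.
  apply: aeS ae => x /(congr1 fst) /= h.
  rewrite /k2 -h /q2; rewrite !(rmorphD, rmorphN, rmorphM, rmorphB) /=; ring.
have c_q1 : continuous q1.
  apply: c_add; first by apply: c_add; [exact: c_w' | exact: c_n0].
  by apply: c_mul; [exact: cst_continuous | exact: c_np].
have c_q2 : continuous q2 by apply: c_add; [exact: c_w' | apply: c_opp; exact: c_n0].
have [Mq1 hMq1] : bnd q1.
  apply: bnd_add; first by apply: bnd_add; [exact: b_w' | exact: b_n0].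
  by apply: bnd_mul; [exact: bnd_cst | exact: b_np].
have [Mq2 hMq2] : bnd q2 by apply: bnd_add; [exact: b_w' | apply: bnd_opp; exact: b_n0].
have Cck1 : Cc k1 by apply: Cc_add; [exact: Cc_mulc | exact: Cc_mulr].
have Cck2 : Cc k2 by apply: Cc_add; [exact: Cc_mulc | exact: Cc_mulr].
have CD1 := weak_CD wd1 Ld1 ae1 Cck1.
have CD2 := weak_CD wd2 Ld2 ae2 Cck2.
have Lk1 : L2C k1 by apply: L2C_add; [exact: L2C_mulc | exact: (L2C_mulr L1 c_q1 hMq1)].
have Lk2 : L2C k2 by apply: L2C_add; [exact: L2C_mulc | exact: (L2C_mulr L2 c_q2 hMq2)].
have c_ee : continuous ee by apply: c_add; [exact: c_w' | exact: c_np].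
have b_ee : bnd ee by apply: bnd_add; [exact: b_w' | exact: b_np].
have [MG hMG] := b_G.
have [MeG hMeG] : bnd (fun x => - ee x * GG x)%R.
  by apply: bnd_mul; [exact: bnd_opp | exact: b_G].
have c_eG : continuous (fun x => - ee x * GG x)%R.
  by apply: c_mul; [exact: c_opp | exact: c_G].
have eB : forall x, B x = ((GG x)%:C * (Bt x).1, (GG x)%:C * (Bt x).2).
  move=> x; rewrite hrel /= !mulrA -!rmorphM GE rmorph1 !mul1r.
  by case: (B x).
have eB1 : (fun x => (B x).1) = (fun x => (GG x)%:C * (Bt x).1) by apply/funext => x; rewrite eB.
have eB2 : (fun x => (B x).2) = (fun x => (GG x)%:C * (Bt x).2) by apply/funext => x; rewrite eB.
pose dB x := ((- ee x * GG x)%R%:C * (Bt x).1 + (GG x)%:C * k1 x,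
              (- ee x * GG x)%R%:C * (Bt x).2 + (GG x)%:C * k2 x).
exists dB; split.
  split.
  - by rewrite eB1; exact: (L2C_mulr L1 c_G hMG).
  - by rewrite eB2; exact: (L2C_mulr L2 c_G hMG).
  - by apply: L2C_add; [exact: (L2C_mulr L1 c_eG hMeG) | exact: (L2C_mulr Lk1 c_G hMG)].
  - by apply: L2C_add; [exact: (L2C_mulr L2 c_eG hMeG) | exact: (L2C_mulr Lk2 c_G hMG)].
  - split.
    + rewrite eB1; apply: CD_weak; first exact: (CD_mulr dG CD1).
      by apply: Cc_add; apply: Cc_mulr => //; exact: c_G.
    + rewrite eB2; apply: CD_weak; first exact: (CD_mulr dG CD2).
      by apply: Cc_add; apply: Cc_mulr => //; exact: c_G.
apply: aeW => x.
rewrite /dB /k1 /k2 /q1 /q2 /ee !eB /=.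
congr (_, _); rewrite !(rmorphD, rmorphN, rmorphM, rmorphB) /=; ring.
Qed.

Lemma nz (Bt B : R -> C * C) :
  (forall x, Bt x = ((E x)%:C * (B x).1, (E x)%:C * (B x).2)) ->
  (Bt <> (fun _ => (0, 0)) <-> B <> (fun _ => (0, 0))).
Proof.
move=> hrel; split => hn h0; apply: hn; apply/funext => x.
  by rewrite hrel h0 /= mulr0.
have E0 : (E x)%:C != 0.
  apply/negP => /eqP h; have := E_ne0 x; case: h => ->; by rewrite eqxx.
have hx : Bt x = (0, 0) by rewrite h0.
move: hx; rewrite hrel => -[].
move=> /eqP; rewrite mulf_eq0 (negbTE E0) /= => /eqP e1.
move=> /eqP; rewrite mulf_eq0 (negbTE E0) /= => /eqP e2.
by case: (B x) e1 e2 => a b /= -> ->.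
Qed.
End Main.
Local Close Scope classical_set_scope.
Theorem corollary8p4 (R : realType) (N r0 w : R -> R)
  (hN : nonlinearity N) (hK : 0 < Kconst N)
  (hr0 : is_r0 N r0) (hw : is_weight N w) (lam : R[i]) :
  ((exists Bt : R -> R[i] * R[i],
       Bt <> (fun _ => (0, 0)) /\ is_eigenfunction N r0 w lam Bt)
   <->
   (exists B : R -> R[i] * R[i],
       B <> (fun _ => (0, 0)) /\ solves_ODE N r0 lam B))
  /\
  (forall Bt B : R -> R[i] * R[i],
     (forall x : R, Bt x = ((transf_weight N r0 w x)%:C * (B x).1,
                            (transf_weight N r0 w x)%:C * (B x).2)) ->
     ((Bt <> (fun _ => (0, 0)) /\ is_eigenfunction N r0 w lam Bt)
      <->
      (B <> (fun _ => (0, 0)) /\ solves_ODE N r0 lam B))).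
Proof.
have part2 : forall Bt B : R -> R[i] * R[i],
     (forall x : R, Bt x = ((transf_weight N r0 w x)%:C * (B x).1,
                            (transf_weight N r0 w x)%:C * (B x).2)) ->
     ((Bt <> (fun _ => (0, 0)) /\ is_eigenfunction N r0 w lam Bt)
      <->
      (B <> (fun _ => (0, 0)) /\ solves_ODE N r0 lam B)).
  move=> Bt B hrel; have hz := nz hrel.
  split => -[h1 h2]; split.
  - exact/hz.
  - exact: (bwd hN hr0 hw hrel h2).
  - exact/hz.
  - exact: (fwd hN hr0 hw hrel h2).
split => //; split.
- move=> [Bt hB].
  pose B x := ((GG N r0 w x)%:C * (Bt x).1, (GG N r0 w x)%:C * (Bt x).2).
  have hrel : forall x : R, Bt x = ((transf_weight N r0 w x)%:C * (B x).1,
                            (transf_weight N r0 w x)%:C * (B x).2).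
    move=> x; rewrite /B /= !mulrA -!rmorphM.
    have e : (transf_weight N r0 w x * GG N r0 w x = 1)%R by rewrite mulrC GE.
    rewrite e rmorph1 !mul1r.
    by case: (Bt x).
  by exists B; apply/(part2 _ _ hrel).
- move=> [B hB].
  pose Bt x := ((transf_weight N r0 w x)%:C * (B x).1,
                (transf_weight N r0 w x)%:C * (B x).2).
  by exists Bt; apply/(part2 Bt B (fun x => erefl)).
Qed.
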